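(* Assume the standing hypotheses (H). If $A$ is a part of $G$ with $|A|\ge 3$ and $\{u,v\}\subseteq A$ is a pair of distinct vertices maximizing $|L(u)\cap L(v)|$ over all such pairs in $A$, then $\{u,v\}$ is a good pair for $A$.
   Context: A list assignment $L$ assigns to each vertex $v$ a set $L(v)$ of colors; an $L$-coloring is a proper coloring $f$ with $f(v)\in L(v)$ for all $v$; $\mathrm{ch}$ denotes choice number and $\chi$ chromatic number. A part of a complete multipartite graph is one of its maximal stable sets. Standing hypotheses (H): $k\ge1$ and $n\ge 2k+2$ are integers; $G$ is a complete $k$-partite graph (exactly $k$ nonempty parts) on $n$ vertices; $L$ is a list assignment for $G$ with $|L(v)|\ge\lceil (n+k-1)/3\rceil$ for every vertex $v$; $G$ has no $L$-coloring; $\left|\bigcup_{v\in V(G)}L(v)\right|\le n-1$; and every graph $H$ with fewer than $n$ vertices satisfies $\mathrm{ch}(H)\le\max\{\chi(H),\lceil(|V(H)|+\chi(H)-1)/3\rceil\}$. For $i\in\{1,2,3,4\}$, $k_i$ denotes the number of parts of $G$ of size $i$. For a part $A$ with $|A|\ge3$, a pair $\{u,v\}\subseteq A$ of distinct vertices is a good pair for $A$ if either $|A|=3$ and $|L(u)\cap L(v)|\ge\frac{k_1+k_4+1}{3}$, or $|A|=4$ and $|L(u)\cap L(v)|\ge|L(w)\cap L(z)|$ where $\{w,z\}=A\setminus\{u,v\}$. *)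

(* Defs.v *)
From mathcomp Require Import all_boot.
Set Implicit Arguments. Unset Strict Implicit. Unset Printing Implicit Defensive.

(* A (simple) graph is a relation [e : rel T] on a finite vertex type T,
   assumed symmetric and irreflexive where needed. *)

Definition ceil_div (a b : nat) : nat := (a + b - 1) %/ b.

Definition colorable (T : finType) (e : rel T) (c : nat) : bool :=
  [exists f : {ffun T -> 'I_c}, [forall x, forall y, e x y ==> (f x != f y)]].

(* chromatic number: least c <= #|T| such that e is c-colourable
   (for loopless graphs #|T| colours always suffice, so this is the usual
   chromatic number). *)
Definition chi (T : finType) (e : rel T) : nat :=
  \big[minn/#|T|]_(c < #|T|.+1 | colorable e c) c.

Definition L_coloring (T C : finType) (e : rel T) (L : T -> {set C})
  (f : T -> C) : Prop :=
  (forall v, f v \in L v) /\ (forall x y, e x y -> f x != f y).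

(* k-choosable: every list assignment with lists of size >= k (over any
   finite colour set) admits an L-colouring.  ch(H) <= k iff H is k-choosable. *)
Definition choosable (T : finType) (e : rel T) (k : nat) : Prop :=
  forall (C : finType) (L : T -> {set C}),
    (forall v, k <= #|L v|) -> exists f : T -> C, L_coloring e L f.

(* Complete k-partite graph given by a part map p : V -> 'I_k:
   x ~ y iff x and y lie in different parts. *)
Definition kpart_rel (V : finType) (k : nat) (p : V -> 'I_k) : rel V :=
  fun x y => p x != p y.

Definition part (V : finType) (k : nat) (p : V -> 'I_k) (j : 'I_k) : {set V} :=
  [set x | p x == j].

Definition kcount (V : finType) (k : nat) (p : V -> 'I_k) (i : nat) : nat :=
  #|[set j : 'I_k | #|part p j| == i]|.

Definition good_pair (V C : finType) (k : nat) (p : V -> 'I_k)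
  (L : V -> {set C}) (A : {set V}) (u v : V) : Prop :=
  [/\ u \in A, v \in A, u != v &
    ((#|A| = 3 /\ kcount p 1 + kcount p 4 + 1 <= 3 * #|L u :&: L v|)
     \/
     (#|A| = 4 /\
      forall w z, w \in A -> z \in A -> w != z ->
        w \notin [set u; v] -> z \notin [set u; v] ->
        #|L w :&: L z| <= #|L u :&: L v|))].

(* Main.v *)
Require Import Defs.
From mathcomp Require Import all_boot.
From mathcomp Require Import zify.
Set Implicit Arguments. Unset Strict Implicit.

Lemma bigmin_le_elem (I : eqType) (r : seq I) (P : pred I) (F : I -> nat) x0 i :
  i \in r -> P i -> \big[minn/x0]_(j <- r | P j) F j <= F i.
Proof.
elim: r => [|a r IH] //=; rewrite inE big_cons => /orP [/eqP <-|ir] Pi.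
  by rewrite Pi geq_minl.
case: (P a); last exact: IH.
by rewrite geq_min IH ?orbT.
Qed.

Lemma chi_le (T : finType) (e : rel T) c : colorable e c -> c <= #|T| -> chi e <= c.
Proof.
move=> hc hle; have hlt : c < #|T|.+1 by [].
rewrite /chi.
have := @bigmin_le_elem _ (index_enum 'I_#|T|.+1) (fun i => colorable e (nat_of_ord i))
   (fun i => nat_of_ord i) #|T| (Ordinal hlt) (mem_index_enum _) hc.
done.
Qed.

Lemma sum_count (V C : finType) (L : V -> {set C}) (A : {set V}) :
  \sum_(x in A) #|L x| = \sum_(c : C) #|[set x in A | c \in L x]|.
Proof.
under eq_bigr => x _ do rewrite -sum1_card big_mkcond /=.
rewrite exchange_big /=; apply: eq_bigr => c _.
rewrite -sum1_card [RHS]big_mkcond [LHS]big_mkcond /=; apply: eq_bigr => x _.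
by rewrite inE; case: (x \in A); case: (c \in L x).
Qed.

Lemma sum_bound (V C : finType) (L : V -> {set C}) (A : {set V}) :
  (forall c, #|[set x in A | c \in L x]| <= 2) ->
  \sum_(x in A) #|L x| <= 2 * #|\bigcup_(v : V) L v|.
Proof.
move=> H; rewrite sum_count -sum1_card big_distrr /= [X in _ <= X]big_mkcond /=.
apply: leq_sum => c _.
case: ifP => cU; first by rewrite muln1.
rewrite leqn0 cards_eq0; apply/eqP/setP => x; rewrite !inE.
apply/negbTE/negP => /andP [_ cx]; move/negbT: cU => /negP; apply.
by apply/bigcupP; exists x.
Qed.

Lemma three_union (C : finType) (A B D : {set C}) :
  #|A| + #|B| + #|D| <= #|A :|: B :|: D| + #|A :&: B| + #|A :&: D| + #|B :&: D|.
Proof.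
have h1 := cardsU A B. have h2 := cardsU (A :|: B) D.
rewrite setIUl in h2.
have h3 : #|A :&: D :|: B :&: D| <= #|A :&: D| + #|B :&: D| by apply: leq_card_setU.
have h4 : #|A :&: B| <= #|A| by apply: subset_leq_card; apply: subsetIl.
have h5 : #|(A :|: B) :&: D| <= #|D| by apply: subset_leq_card; apply: subsetIr.
have h6 : #|A :&: B| + #|A :|: B| = #|A| + #|B| by rewrite addnC; apply: cardsUI.
have h7 : #|(A :|: B) :&: D| + #|A :|: B :|: D| = #|A :|: B| + #|D|
  by rewrite addnC; apply: cardsUI.
rewrite setIUl in h7.
lia.
Qed.
Lemma no_triple (k n : nat) (V C : finType) (p : V -> 'I_k) (L : V -> {set C})
  (hk : 1 <= k) (hn : 2 * k + 2 <= n) (hV : #|V| = n)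
  (hL : forall v, ceil_div (n + k - 1) 3 <= #|L v|)
  (hmin : forall (T : finType) (e : rel T), #|T| < n ->
      symmetric e -> irreflexive e ->
      choosable e (maxn (chi e) (ceil_div (#|T| + chi e - 1) 3)))
  (c : C) (x y z : V) (xy : x != y) (yz : y != z) (zx : z != x)
  (pxy : p x = p y) (pxz : p x = p z)
  (cx : c \in L x) (cy : c \in L y) (cz : c \in L z) :
  exists f : V -> C, L_coloring (kpart_rel p) L f.
Proof.
pose S : {set V} := [set x; y; z].
pose T := {w : V | w \notin S}.
have hS : #|S| = 3.
  rewrite /S -setUA !cardsU1 cards1 !inE.
  by rewrite (negbTE xy) yz eq_sym (negbTE zx).
have hT : #|{: T}| = n - 3.
  rewrite card_sig.
  have -> : #|[pred w | w \notin S]| = #|~: S| by apply: eq_card => w; rewrite !inE.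
  have := cardsC S; lia.
pose e' : rel T := fun a b => p (val a) != p (val b).
have sym : symmetric e' by move=> a b; rewrite /e' eq_sym.
have irr : irreflexive e' by move=> a; rewrite /e' eqxx.
have hchi : chi e' <= k.
  apply: (@chi_le T e' k); last by rewrite hT; lia.
  apply/existsP; exists [ffun w => p (val w)]; apply/forallP => a; apply/forallP => b.
  by rewrite !ffunE; apply/implyP.
have hT' : #|{: T}| < n by rewrite hT; lia.
have := hmin _ e' hT' sym irr C (fun w => L (val w) :\ c).
case.
  move=> w; have := hL (val w); have := cardsD1 c (L (val w)).
  rewrite /ceil_div; rewrite hT => h1 h2.
  rewrite geq_max; apply/andP; split; lia.
move=> f' [f'L f'e].
have inS : forall w, w \in S -> c \in L w /\ p w = p x.
  by move=> w; rewrite !inE => /orP [/orP [] | ] /eqP ->.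
pose f (w : V) := if insub w is Some w' then f' w' else c.
exists f; split.
  move=> w; rewrite /f; case: insubP => [w' _ <-| ].
    by have := f'L w'; rewrite !inE => /andP [].
  by rewrite negbK => /inS [].
move=> a b; rewrite /kpart_rel /f.
case: insubP => [a' _ <-| aS]; case: insubP => [b' _ <-| bS].
- by move=> h; apply: f'e.
- by move=> _; have := f'L a'; rewrite !inE => /andP [].
- by move=> _; have := f'L b'; rewrite !inE eq_sym => /andP [].
- rewrite negbK in aS; rewrite negbK in bS.
  by have [_ ->] := inS _ aS; have [_ ->] := inS _ bS; rewrite eqxx.
Qed.

Theorem corollary22
  (k n : nat) (V C : finType) (p : V -> 'I_k) (L : V -> {set C})
  (hk : 1 <= k) (hn : 2 * k + 2 <= n)
  (hV : #|V| = n)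
  (hsurj : forall j : 'I_k, exists x : V, p x = j)
  (hL : forall v, ceil_div (n + k - 1) 3 <= #|L v|)
  (hnocol : ~ exists f : V -> C, L_coloring (kpart_rel p) L f)
  (hunion : #|\bigcup_(v : V) L v| <= n - 1)
  (hmin : forall (T : finType) (e : rel T), #|T| < n ->
      symmetric e -> irreflexive e ->
      choosable e (maxn (chi e) (ceil_div (#|T| + chi e - 1) 3)))
  (j : 'I_k) (u v : V)
  (hA : 3 <= #|part p j|)
  (hu : u \in part p j) (hv : v \in part p j) (huv : u != v)
  (hmax : forall x y, x \in part p j -> y \in part p j -> x != y ->
      #|L x :&: L y| <= #|L u :&: L v|) :
  good_pair p L (part p j) u v.
Proof.
set m := ceil_div (n + k - 1) 3.
have hm : n + k - 1 <= 3 * m by rewrite /m /ceil_div; lia.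
have cnt : forall j0 c, #|[set x in part p j0 | c \in L x]| <= 2.
  move=> j0 c; rewrite leqNgt; apply/negP => /card_gt2P [x [y [z [[hx hy hz] [xy yz zx]]]]].
  rewrite !inE in hx hy hz.
  move/andP: hx => [/eqP px cx]; move/andP: hy => [/eqP py cy]; move/andP: hz => [/eqP pz cz].
  apply: hnocol; apply: (@no_triple k n V C p L hk hn hV hL hmin c x y z) => //.
  - by rewrite px py.
  - by rewrite px pz.
have partbd : forall j0, #|part p j0| * m <= 2 * (n - 1).
  move=> j0; apply: (@leq_trans (\sum_(x in part p j0) #|L x|)).
    rewrite -sum_nat_const; apply: leq_sum => x _; exact: hL.
  apply: leq_trans (sum_bound (cnt j0)) _.
  by rewrite leq_mul2l hunion orbT.
have le5 : forall j0, #|part p j0| <= 5.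
  move=> j0; rewrite leqNgt; apply/negP => h.
  have : 6 * m <= #|part p j0| * m by rewrite leq_mul2r h orbT.
  have := partbd j0; lia.
have nle : n <= 5 * k.
  have -> : n = \sum_(j0 : 'I_k) #|part p j0|.
    rewrite -hV -sum1_card (partition_big p predT) //; apply: eq_bigr => j0 _.
    rewrite -sum1_card; apply: eq_bigl => x; by rewrite /= inE.
  apply: (@leq_trans (\sum_(j0 : 'I_k) 5)); first by apply: leq_sum => j0 _; exact: le5.
  by rewrite big_const_ord iter_addn_0 mulnC.
have h5 : #|part p j| != 5.
  apply/negP => /eqP h; have := partbd j; rewrite h; lia.
have := le5 j.
split => //.
have [h3|h3] := eqVneq #|part p j| 3; last first.
  right; split; first by lia.
  by move=> w z hw hz wz _ _; apply: hmax.
left; split => //.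
have : 0 < #|part p j :\ u :\ v|.
  have e1 := cardsD1 u (part p j); have e2 := cardsD1 v (part p j :\ u).
  rewrite hu in e1; rewrite !inE eq_sym huv /= in e2; rewrite inE in hv; rewrite hv in e2.
  lia.
case/card_gt0P => w; rewrite !inE => /and3P [wv wu /eqP pw].
have hw : w \in part p j by rewrite inE pw.
set M := #|L u :&: L v|.
have tu := three_union (L u) (L v) (L w).
have hU : #|L u :|: L v :|: L w| <= n - 1.
  apply: leq_trans hunion; apply: subset_leq_card; apply/subsetP => c.
  rewrite !inE => /orP [/orP [] | ] hc; apply/bigcupP; by [exists u | exists v | exists w].
have huw : #|L u :&: L w| <= M by apply: hmax => //; rewrite eq_sym.
have hvw : #|L v :&: L w| <= M by apply: hmax => //; rewrite eq_sym.
have Lu := hL u; have Lv := hL v; have Lw := hL w; rewrite -/m in Lu Lv Lw.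
have kc : kcount p 1 + kcount p 4 + 1 <= k.
  set S1 := [set j0 : 'I_k | #|part p j0| == 1].
  set S4 := [set j0 : 'I_k | #|part p j0| == 4].
  have d : S1 :&: S4 = set0.
    apply/setP => j0; rewrite !inE; apply/negP => /andP [/eqP -> ]; done.
  have c14 := cardsU S1 S4; rewrite d cards0 subn0 in c14.
  have jn : j \notin S1 :|: S4 by rewrite !inE h3.
  have e1 := cardsU1 j (S1 :|: S4); rewrite jn c14 in e1.
  have e2 := max_card (mem (j |: (S1 :|: S4))); rewrite card_ord in e2.
  have e3 : #|mem (j |: (S1 :|: S4))| = #|j |: (S1 :|: S4)| by [].
  rewrite /kcount -/S1 -/S4; rewrite e3 e1 in e2; lia.
lia.
Qed.
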